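(* Consider the linearized ADM iteration described in the context, and let $L_k=L(\Omega_k,U_k,Q_k,W_k,\varepsilon^{(1)}_k,\varepsilon^{(2)}_k,Z^{(1)}_k,Z^{(2)}_k)$. Suppose that $\mu\geq\sqrt2\max\{\rho_1,\rho_2\}$. Then there exist positive values $\eta^0_U,\eta^0_Q,\eta^0_W$, depending only on the initial values, such that whenever $\eta_U>\eta^0_U$, $\eta_Q>\eta^0_Q$, $\eta_W>\eta^0_W$, the sequence $\{L_k\}_{k=1}^\infty$ is positive and decreasing, hence convergent.
   Context: Data: $X\in\mathbb{R}^{m\times n}$, $H\in\mathbb{R}^{s\times n}$, $Y\in\mathbb{R}^{c\times n}$; parameters $\lambda_1,\lambda_2,\rho_1,\rho_2,\delta_1,\delta_2,\mu>0$ and step parameters $\eta_U,\eta_Q,\eta_W>0$. Variables: $\Omega\in\mathbb{R}^{r\times m}$, $U\in\mathbb{R}^{r\times n}$, $Q\in\mathbb{R}^{s\times r}$, $W\in\mathbb{R}^{c\times s}$, $\varepsilon^{(1)},Z^{(1)}\in\mathbb{R}^{s\times n}$, $\varepsilon^{(2)},Z^{(2)}\in\mathbb{R}^{c\times n}$. Matrix norms are Frobenius norms, $\langle A,B\rangle=\mathrm{tr}(A^TB)$, $\|U\|_1=\sum_{ij}|U_{ij}|$. The Lagrangian is $L(\Omega,U,Q,W,\varepsilon^{(1)},\varepsilon^{(2)},Z^{(1)},Z^{(2)})=\frac12\|U-\Omega X\|_F^2+\lambda_1\|U\|_1+\frac{\rho_1}{2}\|\varepsilon^{(1)}\|^2+\frac{\rho_2}{2}\|\varepsilon^{(2)}\|^2+\langle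 Z^{(1)},H-QU-\varepsilon^{(1)}\rangle+\langle Z^{(2)},Y-WQU-\varepsilon^{(2)}\rangle+\frac{\mu}{2}\|H-QU-\varepsilon^{(1)}\|^2+\frac{\mu}{2}\|Y-WQU-\varepsilon^{(2)}\|^2+\frac{\delta_1}{2}\|Q\|^2+\frac{\delta_2}{2}\|W\|^2+\frac{\lambda_2}{2}\|\Omega\|^2$, and $L_s=L-\lambda_1\|U\|_1$. Let $\tau_t$ be entrywise soft thresholding, $\tau_t(x)=\mathrm{sign}(x)\max(|x|-t,0)$. Starting from an initialization $\Theta_0$, for $k=0,1,2,\dots$: $U_{k+1}=\tau_{\lambda_1/(\mu\eta_U)}\big(U_k-\frac{1}{\mu\eta_U}\nabla_U L_s(\Omega_k,U_k,Q_k,W_k,\varepsilon^{(1)}_k,\varepsilon^{(2)}_k,Z^{(1)}_k,Z^{(2)}_k)\big)$; $Q_{k+1}=Q_k-\frac{1}{\mu\eta_Q}\nabla_Q L(\Omega_k,U_{k+1},Q_k,W_k,\varepsilon^{(1)}_k,\varepsilon^{(2)}_k,Z^{(1)}_k,Z^{(2)}_k)$; $W_{k+1}=W_k-\frac{1}{\mu\eta_W}\nabla_W L(\Omega_k,U_{k+1},Q_{k+1},W_k,\varepsilon^{(1)}_k,\varepsilon^{(2)}_k,Z^{(1)}_k,Z^{(2)}_k)$; $\Omega_{k+1}=\arg\min_\Omega L(\Omega,U_{k+1},Q_{k+1},W_{k+1},\varepsilon^{(1)}_k,\varepsilon^{(2)}_k,Z^{(1)}_k,Z^{(2)}_k)$;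 $\varepsilon^{(1)}_{k+1}=\arg\min_{\varepsilon^{(1)}} L(\Omega_{k+1},U_{k+1},Q_{k+1},W_{k+1},\varepsilon^{(1)},\varepsilon^{(2)}_k,Z^{(1)}_k,Z^{(2)}_k)$; $\varepsilon^{(2)}_{k+1}=\arg\min_{\varepsilon^{(2)}} L(\Omega_{k+1},U_{k+1},Q_{k+1},W_{k+1},\varepsilon^{(1)}_{k+1},\varepsilon^{(2)},Z^{(1)}_k,Z^{(2)}_k)$; $Z^{(1)}_{k+1}=Z^{(1)}_k+\mu(H-Q_{k+1}U_{k+1}-\varepsilon^{(1)}_{k+1})$; $Z^{(2)}_{k+1}=Z^{(2)}_k+\mu(Y-W_{k+1}Q_{k+1}U_{k+1}-\varepsilon^{(2)}_{k+1})$. ''Decreasing'' means $L_{k+1}\le L_k$ for all $k\ge1$. *)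

(* Defs.v *)
From HB Require Import structures.
From mathcomp Require Import all_boot all_order all_algebra.
From mathcomp Require Import all_classical all_reals all_analysis.
Set Implicit Arguments. Unset Strict Implicit. Unset Printing Implicit Defensive.
Import Order.TTheory GRing.Theory Num.Theory.
Local Open Scope ring_scope.

Section LADM.
Variable R : realType.

Definition fip {p q : nat} (A B : 'M[R]_(p, q)) : R := \tr (A^T *m B).
Definition fsq {p q : nat} (A : 'M[R]_(p, q)) : R := fip A A.
Definition l1n {p q : nat} (A : 'M[R]_(p, q)) : R := \sum_i \sum_j `|A i j|.
Definition soft (t x : R) : R := Num.sg x * Num.max (`|x| - t) 0.
Definition softmx (t : R) {p q : nat} (A : 'M[R]_(p, q)) : 'M[R]_(p, q) :=
  map_mx (soft t) A.

Variables (m n r s c : nat).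
Variables (X : 'M[R]_(m, n)) (H : 'M[R]_(s, n)) (Y : 'M[R]_(c, n)).
Variables (lam1 lam2 rho1 rho2 delta1 delta2 mu : R).

Definition Ls (Om : 'M[R]_(r, m)) (U : 'M[R]_(r, n)) (Q : 'M[R]_(s, r))
  (W : 'M[R]_(c, s)) (e1 : 'M[R]_(s, n)) (e2 : 'M[R]_(c, n))
  (Z1 : 'M[R]_(s, n)) (Z2 : 'M[R]_(c, n)) : R :=
  fsq (U - Om *m X) / 2
  + rho1 / 2 * fsq e1 + rho2 / 2 * fsq e2
  + fip Z1 (H - Q *m U - e1) + fip Z2 (Y - W *m Q *m U - e2)
  + mu / 2 * fsq (H - Q *m U - e1) + mu / 2 * fsq (Y - W *m Q *m U - e2)
  + delta1 / 2 * fsq Q + delta2 / 2 * fsq W + lam2 / 2 * fsq Om.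

Definition Lag Om U Q W e1 e2 Z1 Z2 : R :=
  Ls Om U Q W e1 e2 Z1 Z2 + lam1 * l1n U.

Definition gradU_Ls (Om : 'M[R]_(r, m)) (U : 'M[R]_(r, n)) (Q : 'M[R]_(s, r))
  (W : 'M[R]_(c, s)) (e1 : 'M[R]_(s, n)) (e2 : 'M[R]_(c, n))
  (Z1 : 'M[R]_(s, n)) (Z2 : 'M[R]_(c, n)) : 'M[R]_(r, n) :=
  (U - Om *m X) - Q^T *m Z1 - mu *: (Q^T *m (H - Q *m U - e1))
  - (W *m Q)^T *m Z2 - mu *: ((W *m Q)^T *m (Y - W *m Q *m U - e2)).

Definition gradQ_L (Om : 'M[R]_(r, m)) (U : 'M[R]_(r, n)) (Q : 'M[R]_(s, r))
  (W : 'M[R]_(c, s)) (e1 : 'M[R]_(s, n)) (e2 : 'M[R]_(c, n))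
  (Z1 : 'M[R]_(s, n)) (Z2 : 'M[R]_(c, n)) : 'M[R]_(s, r) :=
  - (Z1 *m U^T) - mu *: ((H - Q *m U - e1) *m U^T)
  - W^T *m Z2 *m U^T - mu *: (W^T *m (Y - W *m Q *m U - e2) *m U^T)
  + delta1 *: Q.

Definition gradW_L (Om : 'M[R]_(r, m)) (U : 'M[R]_(r, n)) (Q : 'M[R]_(s, r))
  (W : 'M[R]_(c, s)) (e1 : 'M[R]_(s, n)) (e2 : 'M[R]_(c, n))
  (Z1 : 'M[R]_(s, n)) (Z2 : 'M[R]_(c, n)) : 'M[R]_(c, s) :=
  - (Z2 *m (Q *m U)^T) - mu *: ((Y - W *m Q *m U - e2) *m (Q *m U)^T)
  + delta2 *: W.

End LADM.

(* Main.v *)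
Require Import Defs.
From HB Require Import structures.
From mathcomp Require Import all_boot all_order all_algebra.
From mathcomp Require Import all_classical all_reals all_analysis.
Import Order.TTheory GRing.Theory Num.Theory.
Import numFieldNormedType.Exports.
Local Open Scope classical_set_scope.
Local Open Scope ring_scope.
From mathcomp Require Import ring lra.
Set Implicit Arguments. Unset Strict Implicit.

Section Basic.
Variable R : realType.
Implicit Types a b : R.

Lemma fipE {p q} (A B : 'M[R]_(p, q)) : fip A B = \sum_i \sum_j A i j * B i j.
Proof.
rewrite /fip /mxtrace exchange_big /=; apply: eq_bigr => j _.
by rewrite !mxE; apply: eq_bigr => i _; rewrite !mxE.
Qed.

Lemma fipC {p q} (A B : 'M[R]_(p, q)) : fip A B = fip B A.
Proof. by rewrite !fipE; apply: eq_bigr => i _; apply: eq_bigr => j _; rewrite mulrC. Qed.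

Lemma fipDr {p q} (A B C : 'M[R]_(p, q)) : fip A (B + C) = fip A B + fip A C.
Proof. by rewrite /fip mulmxDr mxtraceD. Qed.
Lemma fipDl {p q} (A B C : 'M[R]_(p, q)) : fip (B + C) A = fip B A + fip C A.
Proof. by rewrite fipC fipDr !(fipC A). Qed.
Lemma fipZr {p q} a (A B : 'M[R]_(p, q)) : fip A (a *: B) = a * fip A B.
Proof. by rewrite /fip -scalemxAr mxtraceZ. Qed.
Lemma fipZl {p q} a (A B : 'M[R]_(p, q)) : fip (a *: A) B = a * fip A B.
Proof. by rewrite fipC fipZr fipC. Qed.
Lemma fipNr {p q} (A B : 'M[R]_(p, q)) : fip A (- B) = - fip A B.
Proof. by rewrite -scaleN1r fipZr mulN1r. Qed.
Lemma fipNl {p q} (A B : 'M[R]_(p, q)) : fip (- A) B = - fip A B.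
Proof. by rewrite fipC fipNr fipC. Qed.
Lemma fipBr {p q} (A B C : 'M[R]_(p, q)) : fip A (B - C) = fip A B - fip A C.
Proof. by rewrite fipDr fipNr. Qed.
Lemma fipBl {p q} (A B C : 'M[R]_(p, q)) : fip (B - C) A = fip B A - fip C A.
Proof. by rewrite fipDl fipNl. Qed.

Lemma fip_trmul {p q k} (A : 'M[R]_(p, q)) (B : 'M[R]_(p, k)) (C : 'M[R]_(q, k)) :
  fip (A^T *m B) C = fip B (A *m C).
Proof. by rewrite /fip trmx_mul trmxK mulmxA. Qed.

Lemma fip_multr {p q k} (A : 'M[R]_(p, k)) (B : 'M[R]_(q, k)) (C : 'M[R]_(p, q)) :
  fip (A *m B^T) C = fip A (C *m B).
Proof. by rewrite /fip trmx_mul trmxK -mulmxA mxtrace_mulC mulmxA. Qed.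

Lemma fsq_ge0 {p q} (A : 'M[R]_(p, q)) : 0 <= fsq A.
Proof. rewrite /fsq fipE; apply: sumr_ge0 => i _; apply: sumr_ge0 => j _; exact: mulr_ge0_le0 || exact: sqr_ge0. Qed.

Lemma fsq_eq0 {p q} (A : 'M[R]_(p, q)) : fsq A = 0 -> A = 0.
Proof.
rewrite /fsq fipE => /eqP; rewrite psumr_eq0; last first.
  by move=> i _; apply: sumr_ge0 => j _; exact: sqr_ge0.
move=> /allP h; apply/matrixP => i j; rewrite mxE.
have /implyP := h i (mem_index_enum _); move=> /(_ isT) /eqP.
move/eqP; rewrite psumr_eq0; last by move=> k _; exact: sqr_ge0.
move=> /allP /(_ j (mem_index_enum _)) /implyP /(_ isT).
by rewrite mulf_eq0 orbb => /eqP.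
Qed.

Lemma fsqD {p q} (A B : 'M[R]_(p, q)) : fsq (A + B) = fsq A + 2 * fip A B + fsq B.
Proof. rewrite /fsq fipDl !fipDr (fipC B A); ring. Qed.
Lemma fsqB {p q} (A B : 'M[R]_(p, q)) : fsq (A - B) = fsq A - 2 * fip A B + fsq B.
Proof. rewrite /fsq fipBl !fipBr (fipC B A); ring. Qed.
Lemma fsqZ {p q} a (A : 'M[R]_(p, q)) : fsq (a *: A) = a ^+ 2 * fsq A.
Proof. rewrite /fsq fipZl fipZr; ring. Qed.
Lemma fsqN {p q} (A : 'M[R]_(p, q)) : fsq (- A) = fsq A.
Proof. by rewrite /fsq fipNl fipNr opprK. Qed.

Lemma fsqB_le {p q} (A B : 'M[R]_(p, q)) : fsq (A - B) <= 2 * fsq A + 2 * fsq B.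
Proof. have := fsq_ge0 (A + B); rewrite fsqB fsqD; lra. Qed.

Lemma cs_sum k (a b : 'I_k -> R) :
  (\sum_i a i * b i) ^+ 2 <= (\sum_i a i ^+ 2) * (\sum_i b i ^+ 2).
Proof.
set A := \sum_i a i ^+ 2; set B := \sum_i b i ^+ 2; set C := \sum_i a i * b i.
have B0 : 0 <= B by apply: sumr_ge0 => i _; exact: sqr_ge0.
have h : 0 <= \sum_i (B * a i - C * b i) ^+ 2 by apply: sumr_ge0 => i _; exact: sqr_ge0.
have e : \sum_i (B * a i - C * b i) ^+ 2 = B * (A * B - C ^+ 2).
  rewrite (eq_bigr (fun i => B^+2 * a i ^+ 2 + (- (2 * B * C)) * (a i * b i) + C ^+ 2 * b i ^+ 2)); last by move=> i _; ring.
  rewrite !big_split /= -!big_distrr /= -/A -/B -/C; ring.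
have [B0e|Bp] := eqVneq B 0.
  have hb : forall i, b i = 0.
    move=> i; move: B0e; rewrite /B => /eqP; rewrite psumr_eq0; last by move=> j _; exact: sqr_ge0.
    by move=> /allP /(_ i (mem_index_enum _)) /implyP /(_ isT); rewrite sqrf_eq0 => /eqP.
  rewrite B0e /C big1 ?expr0n ?mulr0 // => i _; by rewrite hb mulr0.
have Bpos : 0 < B by rewrite lt_def Bp B0.
move: h; rewrite e (pmulr_rge0 _ Bpos) subr_ge0; lra.
Qed.

Lemma fsqE {p q} (A : 'M[R]_(p, q)) : fsq A = \sum_i \sum_j A i j ^+ 2.
Proof. by rewrite /fsq fipE; apply: eq_bigr => i _; apply: eq_bigr => j _; rewrite expr2. Qed.

Lemma fsq_mul_le {p q k} (A : 'M[R]_(p, q)) (B : 'M[R]_(q, k)) :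
  fsq (A *m B) <= fsq A * fsq B.
Proof.
rewrite !fsqE (exchange_big _ _ _ _ _ (fun i j => B i j ^+ 2)) /= big_distrl /=.
apply: ler_sum => i _; rewrite big_distrr /=; apply: ler_sum => j _.
rewrite mxE; exact: cs_sum.
Qed.

Lemma l1n_ge0 {p q} (A : 'M[R]_(p, q)) : 0 <= l1n A.
Proof. by apply: sumr_ge0 => i _; apply: sumr_ge0. Qed.

Lemma entry_le_l1n {p q} (A : 'M[R]_(p, q)) i j : `|A i j| <= l1n A.
Proof.
rewrite /l1n (bigD1 i) //= (bigD1 j) //= -addrA lerDl.
apply: addr_ge0; first by apply: sumr_ge0.
by apply: sumr_ge0 => i' _; apply: sumr_ge0.
Qed.

Lemma fsq_le_l1n {p q} (A : 'M[R]_(p, q)) : fsq A <= l1n A ^+ 2.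
Proof.
rewrite fsqE expr2 {2}/l1n big_distrr /=; apply: ler_sum => i _.
rewrite big_distrr /=; apply: ler_sum => j _.
have e : A i j ^+ 2 = `|A i j| * `|A i j| by rewrite -normrM -expr2 ger0_norm ?sqr_ge0.
rewrite e; apply: ler_wpM2r => //; exact: entry_le_l1n.
Qed.

Lemma soft_min (t x u : R) : 0 <= t ->
  t * `|soft t x| + (soft t x - x) ^+ 2 / 2 <= t * `|u| + (u - x) ^+ 2 / 2.
Proof.
move=> t0; rewrite /soft.
have hu1 : `|u| >= u by exact: ler_norm.
have hu2 : `|u| >= - u by rewrite -normrN ler_norm.
have h1 : t * u <= t * `|u| by rewrite ler_wpM2l.
have h2 : t * (- u) <= t * `|u| by rewrite ler_wpM2l.
have [x0|x0] := leP 0 x.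
  rewrite (ger0_norm x0).
  have [xt|xt] := leP (x - t) 0.
    rewrite mulr0 normr0; nra.
  have [x00|xpos] := eqVneq x 0; first lra.
  rewrite gtr0_sg ?lt_def ?xpos ?x0 // mul1r ger0_norm; [have := sqr_ge0 (u - x + t); nra|lra].
rewrite (ltr0_norm x0) ltr0_sg // mulN1r.
have [xt|xt] := leP (- x - t) 0.
  rewrite oppr0 normr0; nra.
rewrite normrN ger0_norm; [have := sqr_ge0 (u - x - t); nra|lra].
Qed.

Lemma prox_scalar (lam a G u : R) : 0 < a -> 0 <= lam ->
  lam * `|soft (lam / a) (u - a^-1 * G)| + G * (soft (lam / a) (u - a^-1 * G) - u)
  + a / 2 * (soft (lam / a) (u - a^-1 * G) - u) ^+ 2 <= lam * `|u|.
Proof.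
move=> a0 l0; set x := u - a^-1 * G; set v := soft _ _.
have t0 : 0 <= lam / a by rewrite divr_ge0 // ltW.
have h := soft_min x u t0; rewrite -/v in h.
have hG : G = a * (u - x) by rewrite /x; field; rewrite gt_eqF.
have hl : lam = a * (lam / a) by field; rewrite gt_eqF.
have := ler_wpM2l (ltW a0) h.
set t := lam / a; rewrite hG hl -/t.
move=> h'; clearbody t v x.
have -> : a * t * `|v| + a * (u - x) * (v - u) + a / 2 * (v - u) ^+ 2
  = a * (t * `|v| + (v - x) ^+ 2 / 2) - a * ((u - x) ^+ 2 / 2) by field.
rewrite mulrDr in h'; lra.
Qed.

Lemma prox_mx {p q} (lam a : R) (U G U' : 'M[R]_(p, q)) : 0 < a -> 0 <= lam ->
  U' = softmx (lam / a) (U - a^-1 *: G) ->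
  lam * l1n U' + fip G (U' - U) + a / 2 * fsq (U' - U) <= lam * l1n U.
Proof.
move=> a0 l0 ->; rewrite fipE fsqE /l1n !big_distrr -!big_split /=.
apply: ler_sum => i _; rewrite !big_distrr -!big_split /=; apply: ler_sum => j _.
rewrite !mxE; exact: prox_scalar.
Qed.
End Basic.

Lemma zid1 (V : zmodType) (a b d e : V) : a - (b + d) - e = a - b - e - d.
Proof. by rewrite opprD addrA (addrAC (a - b)). Qed.

Section Steps.
Variable R : realType.
Variables (m n r s c : nat).
Variables (X : 'M[R]_(m, n)) (H : 'M[R]_(s, n)) (Y : 'M[R]_(c, n)).
Variables (lam1 lam2 rho1 rho2 delta1 delta2 mu : R).
Hypothesis (l1p : 0 < lam1) (mup : 0 < mu) (d1p : 0 < delta1) (d2p : 0 < delta2).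


Local Notation L := (Lag X H Y lam1 lam2 rho1 rho2 delta1 delta2 mu).

Lemma U_step (Om : 'M[R]_(r, m)) (U U' : 'M[R]_(r, n)) (Q : 'M[R]_(s, r))
  (W : 'M[R]_(c, s)) (e1 Z1 : 'M[R]_(s, n)) (e2 Z2 : 'M[R]_(c, n)) (a : R) :
  0 < a -> 1 + mu * fsq Q + mu * (fsq W * fsq Q) <= a ->
  U' = softmx (lam1 / a) (U - a^-1 *: gradU_Ls X H Y mu Om U Q W e1 e2 Z1 Z2) ->
  L Om U' Q W e1 e2 Z1 Z2 <= L Om U Q W e1 e2 Z1 Z2.
Proof.
move=> a0 ha hU'.
set G := gradU_Ls X H Y mu Om U Q W e1 e2 Z1 Z2.
have hp := prox_mx a0 (ltW l1p) hU'; rewrite -/G in hp.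
set D := U' - U in hp.
have eU : U' = U + D by rewrite /D addrC subrK.
have qd := fsq_mul_le Q D.
have wqd := fsq_mul_le (W *m Q) D.
have wq := fsq_mul_le W Q.
have fD := fsq_ge0 D.
have fQ := fsq_ge0 Q.
have fW := fsq_ge0 W.
have eG : fip G D = fip (U - Om *m X) D - fip Z1 (Q *m D)
   - mu * fip (H - Q *m U - e1) (Q *m D) - fip Z2 (W *m Q *m D)
   - mu * fip (Y - W *m Q *m U - e2) (W *m Q *m D).
  rewrite /G /gradU_Ls !fipBl !fipZl !fip_trmul !fipBl; ring.
have eL : L Om U' Q W e1 e2 Z1 Z2 = L Om U Q W e1 e2 Z1 Z2 + lam1 * l1n U' - lam1 * l1n U
   + fip G D + (fsq D + mu * fsq (Q *m D) + mu * fsq (W *m Q *m D)) / 2.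
  clearbody D; rewrite eU.
  have E1 : fsq (U + D - Om *m X) = fsq (U - Om *m X) + 2 * fip (U - Om *m X) D + fsq D
    by rewrite (addrAC U D) (fsqD (U - Om *m X) D).
  have E2 : fsq (H - Q *m (U + D) - e1) = fsq (H - Q *m U - e1) - 2 * fip (H - Q *m U - e1) (Q *m D) + fsq (Q *m D)
    by rewrite mulmxDr zid1 (fsqB (H - Q *m U - e1)).
  have E3 : fsq (Y - W *m Q *m (U + D) - e2) = fsq (Y - W *m Q *m U - e2) - 2 * fip (Y - W *m Q *m U - e2) (W *m Q *m D) + fsq (W *m Q *m D)
    by rewrite mulmxDr zid1 (fsqB (Y - W *m Q *m U - e2)).
  have E4 : fip Z1 (H - Q *m (U + D) - e1) = fip Z1 (H - Q *m U - e1) - fip Z1 (Q *m D)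
    by rewrite mulmxDr zid1 (fipBr Z1 (H - Q *m U - e1)).
  have E5 : fip Z2 (Y - W *m Q *m (U + D) - e2) = fip Z2 (Y - W *m Q *m U - e2) - fip Z2 (W *m Q *m D)
    by rewrite mulmxDr zid1 (fipBr Z2 (Y - W *m Q *m U - e2)).
  rewrite eG /Lag /Ls E1 E2 E3 E4 E5; by field.
rewrite eL.
have h1 : fsq (W *m Q *m D) <= fsq W * fsq Q * fsq D.
  apply: (le_trans wqd); apply: ler_wpM2r => //.
have k2 : (1 + mu * fsq Q + mu * (fsq W * fsq Q)) * fsq D <= a * fsq D by apply: ler_wpM2r.
have k1 : mu * fsq (Q *m D) <= mu * (fsq Q * fsq D) by apply: ler_wpM2l => //; exact: ltW.
have k3 : mu * fsq (W *m Q *m D) <= mu * (fsq W * fsq Q * fsq D) by apply: ler_wpM2l => //; exact: ltW.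
lra.
Qed.

Lemma Q_step (Om : 'M[R]_(r, m)) (U : 'M[R]_(r, n)) (Q Q' : 'M[R]_(s, r))
  (W : 'M[R]_(c, s)) (e1 Z1 : 'M[R]_(s, n)) (e2 Z2 : 'M[R]_(c, n)) (a : R) :
  0 < a -> mu * fsq U + mu * (fsq W * fsq U) + delta1 <= a ->
  Q' = Q - a^-1 *: gradQ_L H Y delta1 mu Om U Q W e1 e2 Z1 Z2 ->
  L Om U Q' W e1 e2 Z1 Z2 <= L Om U Q W e1 e2 Z1 Z2.
Proof.
move=> a0 ha hQ'.
set G := gradQ_L H Y delta1 mu Om U Q W e1 e2 Z1 Z2 in hQ'.
set D := Q' - Q.
have eD : D = - (a^-1 *: G) by rewrite /D hQ' addrAC subrr add0r.
have eU : Q' = Q + D by rewrite /D addrC subrK.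
have fGD : fip G D = - a * fsq D.
  rewrite eD fipNr fipZr /fsq fipNl fipNr opprK fipZl fipZr; field; rewrite gt_eqF //.
have eG : fip G D = - fip Z1 (D *m U) - mu * fip (H - Q *m U - e1) (D *m U)
   - fip Z2 (W *m D *m U) - mu * fip (Y - W *m Q *m U - e2) (W *m D *m U) + delta1 * fip Q D.
  rewrite /G /gradQ_L !(fipDl, fipNl, fipZl, fip_multr, fip_trmul) !mulmxA ?(fipDl, fipNl); ring.
have eL : L Om U Q' W e1 e2 Z1 Z2 = L Om U Q W e1 e2 Z1 Z2
   + fip G D + (mu * fsq (D *m U) + mu * fsq (W *m D *m U) + delta1 * fsq D) / 2.
  clearbody D; rewrite eU.
  have E1 : fsq (Q + D) = fsq Q + 2 * fip Q D + fsq D by rewrite fsqD.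
  have E2 : fsq (H - (Q + D) *m U - e1) = fsq (H - Q *m U - e1) - 2 * fip (H - Q *m U - e1) (D *m U) + fsq (D *m U)
    by rewrite mulmxDl zid1 (fsqB (H - Q *m U - e1)).
  have E3 : fsq (Y - W *m (Q + D) *m U - e2) = fsq (Y - W *m Q *m U - e2) - 2 * fip (Y - W *m Q *m U - e2) (W *m D *m U) + fsq (W *m D *m U)
    by rewrite mulmxDr mulmxDl zid1 (fsqB (Y - W *m Q *m U - e2)).
  have E4 : fip Z1 (H - (Q + D) *m U - e1) = fip Z1 (H - Q *m U - e1) - fip Z1 (D *m U)
    by rewrite mulmxDl zid1 (fipBr Z1 (H - Q *m U - e1)).
  have E5 : fip Z2 (Y - W *m (Q + D) *m U - e2) = fip Z2 (Y - W *m Q *m U - e2) - fip Z2 (W *m D *m U)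
    by rewrite mulmxDr mulmxDl zid1 (fipBr Z2 (Y - W *m Q *m U - e2)).
  rewrite eG /Lag /Ls E1 E2 E3 E4 E5; by field.
rewrite eL fGD.
have fD := fsq_ge0 D; have fU := fsq_ge0 U; have fW := fsq_ge0 W.
have h1 : fsq (W *m D *m U) <= fsq W * fsq D * fsq U.
  apply: (le_trans (fsq_mul_le _ _)); apply: ler_wpM2r => //; exact: fsq_mul_le.
have h0 : fsq (D *m U) <= fsq D * fsq U by exact: fsq_mul_le.
have k2 : (mu * fsq U + mu * (fsq W * fsq U) + delta1) * fsq D <= a * fsq D by apply: ler_wpM2r.
have k1 : mu * fsq (D *m U) <= mu * (fsq D * fsq U) by apply: ler_wpM2l => //; exact: ltW.
have k3 : mu * fsq (W *m D *m U) <= mu * (fsq W * fsq D * fsq U) by apply: ler_wpM2l => //; exact: ltW.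
have k4 : 0 <= a * fsq D by apply: mulr_ge0 => //; exact: ltW.
lra.
Qed.

Lemma W_step (Om : 'M[R]_(r, m)) (U : 'M[R]_(r, n)) (Q : 'M[R]_(s, r))
  (W W' : 'M[R]_(c, s)) (e1 Z1 : 'M[R]_(s, n)) (e2 Z2 : 'M[R]_(c, n)) (a : R) :
  0 < a -> mu * (fsq Q * fsq U) + delta2 <= a ->
  W' = W - a^-1 *: gradW_L Y delta2 mu Om U Q W e1 e2 Z1 Z2 ->
  L Om U Q W' e1 e2 Z1 Z2 <= L Om U Q W e1 e2 Z1 Z2.
Proof.
move=> a0 ha hW'.
set G := gradW_L Y delta2 mu Om U Q W e1 e2 Z1 Z2 in hW'.
set D := W' - W.
have eD : D = - (a^-1 *: G) by rewrite /D hW' addrAC subrr add0r.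
have eU : W' = W + D by rewrite /D addrC subrK.
have fGD : fip G D = - a * fsq D.
  rewrite eD fipNr fipZr /fsq fipNl fipNr opprK fipZl fipZr; field; rewrite gt_eqF //.
have eG : fip G D = - fip Z2 (D *m Q *m U) - mu * fip (Y - W *m Q *m U - e2) (D *m Q *m U)
   + delta2 * fip W D.
  rewrite /G /gradW_L !(fipDl, fipNl, fipZl, fip_multr, fip_trmul) !mulmxA ?(fipDl, fipNl); ring.
have eL : L Om U Q W' e1 e2 Z1 Z2 = L Om U Q W e1 e2 Z1 Z2
   + fip G D + (mu * fsq (D *m Q *m U) + delta2 * fsq D) / 2.
  clearbody D; rewrite eU.
  have E1 : fsq (W + D) = fsq W + 2 * fip W D + fsq D by rewrite fsqD.
  have E3 : fsq (Y - (W + D) *m Q *m U - e2) = fsq (Y - W *m Q *m U - e2) - 2 * fip (Y - W *m Q *m U - e2) (D *m Q *m U) + fsq (D *m Q *m U)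
    by rewrite !mulmxDl zid1 (fsqB (Y - W *m Q *m U - e2)).
  have E5 : fip Z2 (Y - (W + D) *m Q *m U - e2) = fip Z2 (Y - W *m Q *m U - e2) - fip Z2 (D *m Q *m U)
    by rewrite !mulmxDl zid1 (fipBr Z2 (Y - W *m Q *m U - e2)).
  rewrite eG /Lag /Ls E1 E3 E5; by field.
rewrite eL fGD.
have fD := fsq_ge0 D; have fU := fsq_ge0 U; have fQ := fsq_ge0 Q.
have h1 : fsq (D *m Q *m U) <= fsq D * fsq Q * fsq U.
  apply: (le_trans (fsq_mul_le _ _)); apply: ler_wpM2r => //; exact: fsq_mul_le.
have k2 : (mu * (fsq Q * fsq U) + delta2) * fsq D <= a * fsq D by apply: ler_wpM2r.
have k3 : mu * fsq (D *m Q *m U) <= mu * (fsq D * fsq Q * fsq U) by apply: ler_wpM2l => //; exact: ltW.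
have k4 : 0 <= a * fsq D by apply: mulr_ge0 => //; exact: ltW.
lra.
Qed.

Lemma e1_expand (Om : 'M[R]_(r, m)) (U : 'M[R]_(r, n)) (Q : 'M[R]_(s, r))
  (W : 'M[R]_(c, s)) (e1 D Z1 : 'M[R]_(s, n)) (e2 Z2 : 'M[R]_(c, n)) :
  L Om U Q W (e1 + D) e2 Z1 Z2 = L Om U Q W e1 e2 Z1 Z2
   + fip (rho1 *: e1 - Z1 - mu *: (H - Q *m U - e1)) D + (rho1 + mu) / 2 * fsq D.
Proof.
have E : H - Q *m U - (e1 + D) = (H - Q *m U - e1) - D by rewrite opprD addrA.
rewrite /Lag /Ls E (fsqD e1 D) (fsqB (H - Q *m U - e1)) (fipBr Z1 (H - Q *m U - e1)).
rewrite (fipBl D (rho1 *: e1 - Z1)) (fipBl D (rho1 *: e1)) !fipZl; by field.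
Qed.

Lemma e2_expand (Om : 'M[R]_(r, m)) (U : 'M[R]_(r, n)) (Q : 'M[R]_(s, r))
  (W : 'M[R]_(c, s)) (e1 Z1 : 'M[R]_(s, n)) (e2 D Z2 : 'M[R]_(c, n)) :
  L Om U Q W e1 (e2 + D) Z1 Z2 = L Om U Q W e1 e2 Z1 Z2
   + fip (rho2 *: e2 - Z2 - mu *: (Y - W *m Q *m U - e2)) D + (rho2 + mu) / 2 * fsq D.
Proof.
have E : Y - W *m Q *m U - (e2 + D) = (Y - W *m Q *m U - e2) - D by rewrite opprD addrA.
rewrite /Lag /Ls E (fsqD e2 D) (fsqB (Y - W *m Q *m U - e2)) (fipBr Z2 (Y - W *m Q *m U - e2)).
rewrite (fipBl D (rho2 *: e2 - Z2)) (fipBl D (rho2 *: e2)) !fipZl; by field.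
Qed.

Lemma argmin_grad0 {p q} (f : 'M[R]_(p, q) -> R) (x g : 'M[R]_(p, q)) (k : R) :
  0 < k -> (forall D, f (x + D) = f x + fip g D + k / 2 * fsq D) ->
  (forall y, f x <= f y) -> g = 0.
Proof.
move=> k0 hf hmin; apply: fsq_eq0.
have := hmin (x + (- k^-1) *: g); rewrite hf fipZr fsqZ /fsq.
move=> h; apply/eqP; rewrite eq_le fsq_ge0 andbT.
have e : fip g g = fsq g by [].
have : 0 <= - k^-1 * fip g g + k / 2 * ((- k^-1) ^+ 2 * fip g g) by lra.
have -> : - k^-1 * fip g g + k / 2 * ((- k^-1) ^+ 2 * fip g g) = - (fip g g) / (2 * k).
  by field; rewrite gt_eqF.
rewrite -/(fsq g) => h2.
have kk : 0 < 2 * k by rewrite mulr_gt0.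
have : 0 <= - fsq g / (2 * k) * (2 * k) by apply: mulr_ge0 => //; exact: ltW.
rewrite divfK ?gt_eqF //; lra.
Qed.

Lemma Z_step (Om : 'M[R]_(r, m)) (U : 'M[R]_(r, n)) (Q : 'M[R]_(s, r))
  (W : 'M[R]_(c, s)) (e1 Z1 : 'M[R]_(s, n)) (e2 Z2 : 'M[R]_(c, n)) :
  L Om U Q W e1 e2 (Z1 + mu *: (H - Q *m U - e1)) (Z2 + mu *: (Y - W *m Q *m U - e2))
  = L Om U Q W e1 e2 Z1 Z2 + mu * fsq (H - Q *m U - e1) + mu * fsq (Y - W *m Q *m U - e2).
Proof. rewrite /Lag /Ls !fipDl !fipZl /fsq; ring. Qed.

Lemma coer_gen (Om : 'M[R]_(r, m)) (U : 'M[R]_(r, n)) (Q : 'M[R]_(s, r))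
  (W : 'M[R]_(c, s)) (e1 Z1 : 'M[R]_(s, n)) (e2 Z2 : 'M[R]_(c, n)) :
  0 <= lam2 ->
  lam1 * l1n U + delta1 / 2 * fsq Q + delta2 / 2 * fsq W + rho1 / 2 * fsq e1
  + rho2 / 2 * fsq e2 - (fsq Z1 + fsq Z2) / (2 * mu) <= L Om U Q W e1 e2 Z1 Z2.
Proof.
move=> l2.
have sq : forall p q (Z A : 'M[R]_(p, q)),
    - (fsq Z / (2 * mu)) <= fip Z A + mu / 2 * fsq A.
  move=> p q Z A.
  have h : mu / 2 * fsq A + fip Z A + fsq Z / (2 * mu) = mu / 2 * fsq (A + mu^-1 *: Z).
    rewrite fsqD fsqZ fipZr (fipC A Z); field; rewrite gt_eqF //.
  have : 0 <= mu / 2 * fsq (A + mu^-1 *: Z).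
    apply: mulr_ge0; [apply: divr_ge0; [exact: ltW|by []] | exact: fsq_ge0].
  lra.
have h1 := sq _ _ Z1 (H - Q *m U - e1).
have h2 := sq _ _ Z2 (Y - W *m Q *m U - e2).
have f1 := fsq_ge0 (U - Om *m X); have f2 : 0 <= lam2 / 2 * fsq Om.
  by apply: mulr_ge0; [apply: divr_ge0 | exact: fsq_ge0].
have -> : (fsq Z1 + fsq Z2) / (2 * mu) = fsq Z1 / (2 * mu) + fsq Z2 / (2 * mu) by rewrite mulrDl.
rewrite /Lag /Ls; lra.
Qed.

Lemma coer_rho (Om : 'M[R]_(r, m)) (U : 'M[R]_(r, n)) (Q : 'M[R]_(s, r))
  (W : 'M[R]_(c, s)) (e1 : 'M[R]_(s, n)) (e2 : 'M[R]_(c, n)) :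
  0 <= lam2 -> 0 <= rho1 <= mu -> 0 <= rho2 <= mu ->
  lam1 * l1n U + delta1 / 2 * fsq Q + delta2 / 2 * fsq W
  <= L Om U Q W e1 e2 (rho1 *: e1) (rho2 *: e2).
Proof.
move=> l2 /andP[r1 r1m] /andP[r2 r2m].
have := coer_gen Om U Q W e1 (rho1 *: e1) e2 (rho2 *: e2) l2.
rewrite !fsqZ.
have k1 : rho1 ^+ 2 * fsq e1 / (2 * mu) <= rho1 / 2 * fsq e1.
  rewrite ler_pdivrMr ?mulr_gt0 //.
  have := fsq_ge0 e1 => fe.
  have : rho1 * rho1 * fsq e1 <= rho1 * mu * fsq e1.
    by apply: ler_wpM2r => //; apply: ler_wpM2l.
  have -> : rho1 / 2 * fsq e1 * (2 * mu) = rho1 * mu * fsq e1 by field.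
  by rewrite expr2.
have k2 : rho2 ^+ 2 * fsq e2 / (2 * mu) <= rho2 / 2 * fsq e2.
  rewrite ler_pdivrMr ?mulr_gt0 //.
  have := fsq_ge0 e2 => fe.
  have : rho2 * rho2 * fsq e2 <= rho2 * mu * fsq e2.
    by apply: ler_wpM2r => //; apply: ler_wpM2l.
  have -> : rho2 / 2 * fsq e2 * (2 * mu) = rho2 * mu * fsq e2 by field.
  by rewrite expr2.
rewrite mulrDl; lra.
Qed.

Lemma iter_step (Om Om' : 'M[R]_(r, m)) (U U' : 'M[R]_(r, n)) (Q Q' : 'M[R]_(s, r))
  (W W' : 'M[R]_(c, s)) (e1 e1' Z1 Z1' : 'M[R]_(s, n)) (e2 e2' Z2 Z2' : 'M[R]_(c, n))
  (aU aQ aW ub qb wb : R) :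
  0 < rho1 -> 0 < rho2 ->
  0 < aU -> 0 < aQ -> 0 < aW -> 0 <= ub -> 0 <= qb -> 0 <= wb ->
  1 + mu * qb + mu * (wb * qb) <= aU ->
  mu * ub + mu * (wb * ub) + delta1 <= aQ ->
  mu * (qb * ub) + delta2 <= aW ->
  (forall (Om0 : 'M[R]_(r, m)) (U0 : 'M[R]_(r, n)) (Q0 : 'M[R]_(s, r)) (W0 : 'M[R]_(c, s)),
     L Om0 U0 Q0 W0 e1 e2 Z1 Z2 <= L Om U Q W e1 e2 Z1 Z2 ->
     [/\ fsq U0 <= ub, fsq Q0 <= qb & fsq W0 <= wb]) ->
  U' = softmx (lam1 / aU) (U - aU^-1 *: gradU_Ls X H Y mu Om U Q W e1 e2 Z1 Z2) ->
  Q' = Q - aQ^-1 *: gradQ_L H Y delta1 mu Om U' Q W e1 e2 Z1 Z2 ->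
  W' = W - aW^-1 *: gradW_L Y delta2 mu Om U' Q' W e1 e2 Z1 Z2 ->
  L Om' U' Q' W' e1 e2 Z1 Z2 <= L Om U' Q' W' e1 e2 Z1 Z2 ->
  (forall e' : 'M[R]_(s, n), L Om' U' Q' W' e1' e2 Z1 Z2 <= L Om' U' Q' W' e' e2 Z1 Z2) ->
  (forall e' : 'M[R]_(c, n), L Om' U' Q' W' e1' e2' Z1 Z2 <= L Om' U' Q' W' e1' e' Z1 Z2) ->
  Z1' = Z1 + mu *: (H - Q' *m U' - e1') ->
  Z2' = Z2 + mu *: (Y - W' *m Q' *m U' - e2') ->
  [/\ L Om' U' Q' W' e1' e2' Z1 Z2 + (rho1 + mu) / 2 * fsq (e1 - e1')
        + (rho2 + mu) / 2 * fsq (e2 - e2') <= L Om U Q W e1 e2 Z1 Z2,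
      Z1' = rho1 *: e1', Z2' = rho2 *: e2' &
      L Om' U' Q' W' e1' e2' Z1' Z2' = L Om' U' Q' W' e1' e2' Z1 Z2
        + mu * fsq (H - Q' *m U' - e1') + mu * fsq (Y - W' *m Q' *m U' - e2')].
Proof.
move=> r1p r2p aU0 aQ0 aW0 ub0 qb0 wb0 haU haQ haW hb hU' hQ' hW' hOm he1 he2 hZ1 hZ2.
have mu0 := ltW mup.
set S0 := L Om U Q W e1 e2 Z1 Z2.
have [_ bQ bW] := hb Om U Q W (lexx _).
have fQ := fsq_ge0 Q; have fW := fsq_ge0 W.
have s1 : L Om U' Q W e1 e2 Z1 Z2 <= S0.
  apply: (U_step aU0 _ hU'); apply: le_trans haU.
  apply: lerD; first by apply: lerD => //; apply: ler_wpM2l.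
  by apply: ler_wpM2l => //; apply: ler_pM.
have [bU' _ _] := hb Om U' Q W s1.
have fU' := fsq_ge0 U'.
have s2 : L Om U' Q' W e1 e2 Z1 Z2 <= S0.
  apply: le_trans s1; apply: (Q_step aQ0 _ hQ'); apply: le_trans haQ.
  apply: lerD => //; apply: lerD; first by apply: ler_wpM2l.
  by apply: ler_wpM2l => //; apply: ler_pM.
have [_ bQ' _] := hb Om U' Q' W s2.
have fQ' := fsq_ge0 Q'.
have s3 : L Om U' Q' W' e1 e2 Z1 Z2 <= S0.
  apply: le_trans s2; apply: (W_step aW0 _ hW'); apply: le_trans haW.
  apply: lerD => //; apply: ler_wpM2l => //; by apply: ler_pM.
have s4 := le_trans hOm s3.
have k1 : 0 < rho1 + mu by rewrite addr_gt0.
have k2 : 0 < rho2 + mu by rewrite addr_gt0.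
have g1 := argmin_grad0 (f := fun e => L Om' U' Q' W' e e2 Z1 Z2) k1
   (fun D => e1_expand Om' U' Q' W' e1' D Z1 e2 Z2) he1.
have g2 := argmin_grad0 (f := fun e => L Om' U' Q' W' e1' e Z1 Z2) k2
   (fun D => e2_expand Om' U' Q' W' e1' Z1 e2' D Z2) he2.
have t1 := e1_expand Om' U' Q' W' e1' (e1 - e1') Z1 e2 Z2.
rewrite g1 addrC subrK /fip trmx0 mul0mx mxtrace0 addr0 in t1.
have t2 := e2_expand Om' U' Q' W' e1' Z1 e2' (e2 - e2') Z2.
rewrite g2 addrC subrK /fip trmx0 mul0mx mxtrace0 addr0 in t2.
split.
- rewrite -/(fip (e1 - e1') (e1 - e1')) -/(fsq (e1 - e1')) in t1.
  rewrite -/(fip (e2 - e2') (e2 - e2')) -/(fsq (e2 - e2')) in t2.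
  lra.
- by rewrite hZ1; move/eqP: g1; rewrite subr_eq0 => /eqP <-; rewrite addrC subrK.
- by rewrite hZ2; move/eqP: g2; rewrite subr_eq0 => /eqP <-; rewrite addrC subrK.
by rewrite hZ1 hZ2 Z_step.
Qed.
End Steps.

Unset Implicit Arguments.
Lemma mu_ineq (R : realType) (mu rho d f : R) : 0 < mu -> 0 <= rho -> 0 <= d ->
  2 * rho ^+ 2 <= mu ^+ 2 -> mu * f * mu = rho ^+ 2 * d ->
  mu * f <= (rho + mu) / 2 * d.
Proof.
move=> mup r0 d0 hm e.
have : mu * f * mu <= (rho + mu) / 2 * d * mu.
  rewrite e.
  have : rho ^+ 2 * d <= mu ^+ 2 / 2 * d by apply: ler_wpM2r => //; lra.
  have : mu ^+ 2 / 2 * d <= (rho + mu) / 2 * d * mu.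
    have -> : (rho + mu) / 2 * d * mu = mu ^+ 2 / 2 * d + rho * mu / 2 * d by ring.
    rewrite lerDl; apply: mulr_ge0 => //; apply: mulr_ge0 => //; apply: mulr_ge0 => //; lra.
  lra.
by rewrite ler_pM2r.
Qed.

Lemma bounds_of (R : realType) p q (lam1 delta1 delta2 M : R) (U : 'M[R]_(p, q))
  {s1 s2 r1 r2 : nat} (Q : 'M[R]_(s1, r1)) (W : 'M[R]_(s2, r2)) :
  0 < lam1 -> 0 < delta1 -> 0 < delta2 ->
  lam1 * l1n U + delta1 / 2 * fsq Q + delta2 / 2 * fsq W <= M ->
  [/\ fsq U <= M / lam1 * (M / lam1), fsq Q <= 2 * M / delta1 & fsq W <= 2 * M / delta2].
Proof.
move=> l1p d1p d2p h.
have fU := fsq_ge0 U; have fQ := fsq_ge0 Q; have fW := fsq_ge0 W; have lU := l1n_ge0 U.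
have a1 : 0 <= lam1 * l1n U by apply: mulr_ge0 => //; exact: ltW.
have a2 : 0 <= delta1 / 2 * fsq Q by apply: mulr_ge0 => //; apply: divr_ge0 => //; exact: ltW.
have a3 : 0 <= delta2 / 2 * fsq W by apply: mulr_ge0 => //; apply: divr_ge0 => //; exact: ltW.
split.
- have hl : l1n U <= M / lam1 by rewrite ler_pdivlMr // mulrC; lra.
  apply: (le_trans (fsq_le_l1n U)); rewrite expr2; apply: ler_pM => //.
- rewrite ler_pdivlMr //; lra.
- rewrite ler_pdivlMr //; lra.
Qed.

Theorem theorem2 (R : realType) (m n r s c : nat)
  (X : 'M[R]_(m, n)) (H : 'M[R]_(s, n)) (Y : 'M[R]_(c, n))
  (lam1 lam2 rho1 rho2 delta1 delta2 mu : R) :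
  0 < lam1 -> 0 < lam2 -> 0 < rho1 -> 0 < rho2 ->
  0 < delta1 -> 0 < delta2 -> 0 < mu ->
  Num.sqrt 2 * Num.max rho1 rho2 <= mu ->
  forall (Om0 : 'M[R]_(r, m)) (U0 : 'M[R]_(r, n)) (Q0 : 'M[R]_(s, r))
    (W0 : 'M[R]_(c, s)) (e10 : 'M[R]_(s, n)) (e20 : 'M[R]_(c, n))
    (Z10 : 'M[R]_(s, n)) (Z20 : 'M[R]_(c, n)),
  exists etaU0 etaQ0 etaW0 : R,
    [/\ 0 < etaU0, 0 < etaQ0, 0 < etaW0 &
    forall etaU etaQ etaW : R,
    etaU0 < etaU -> etaQ0 < etaQ -> etaW0 < etaW ->
    forall (Om : nat -> 'M[R]_(r, m)) (U : nat -> 'M[R]_(r, n))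
      (Q : nat -> 'M[R]_(s, r)) (W : nat -> 'M[R]_(c, s))
      (e1 : nat -> 'M[R]_(s, n)) (e2 : nat -> 'M[R]_(c, n))
      (Z1 : nat -> 'M[R]_(s, n)) (Z2 : nat -> 'M[R]_(c, n)),
    Om 0%N = Om0 -> U 0%N = U0 -> Q 0%N = Q0 -> W 0%N = W0 ->
    e1 0%N = e10 -> e2 0%N = e20 -> Z1 0%N = Z10 -> Z2 0%N = Z20 ->
    (forall k, U k.+1 = softmx (lam1 / (mu * etaU))
       (U k - (mu * etaU)^-1 *:
          gradU_Ls X H Y mu (Om k) (U k) (Q k) (W k) (e1 k) (e2 k) (Z1 k) (Z2 k))) ->
    (forall k, Q k.+1 = Q k - (mu * etaQ)^-1 *:
          gradQ_L H Y delta1 mu (Om k) (U k.+1) (Q k) (W k) (e1 k) (e2 k) (Z1 k) (Z2 k)) ->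
    (forall k, W k.+1 = W k - (mu * etaW)^-1 *:
          gradW_L Y delta2 mu (Om k) (U k.+1) (Q k.+1) (W k) (e1 k) (e2 k) (Z1 k) (Z2 k)) ->
    (forall k (Om' : 'M[R]_(r, m)),
       Lag X H Y lam1 lam2 rho1 rho2 delta1 delta2 mu
         (Om k.+1) (U k.+1) (Q k.+1) (W k.+1) (e1 k) (e2 k) (Z1 k) (Z2 k)
       <= Lag X H Y lam1 lam2 rho1 rho2 delta1 delta2 mu
         Om' (U k.+1) (Q k.+1) (W k.+1) (e1 k) (e2 k) (Z1 k) (Z2 k)) ->
    (forall k (e' : 'M[R]_(s, n)),
       Lag X H Y lam1 lam2 rho1 rho2 delta1 delta2 mu
         (Om k.+1) (U k.+1) (Q k.+1) (W k.+1) (e1 k.+1) (e2 k) (Z1 k) (Z2 k)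
       <= Lag X H Y lam1 lam2 rho1 rho2 delta1 delta2 mu
         (Om k.+1) (U k.+1) (Q k.+1) (W k.+1) e' (e2 k) (Z1 k) (Z2 k)) ->
    (forall k (e' : 'M[R]_(c, n)),
       Lag X H Y lam1 lam2 rho1 rho2 delta1 delta2 mu
         (Om k.+1) (U k.+1) (Q k.+1) (W k.+1) (e1 k.+1) (e2 k.+1) (Z1 k) (Z2 k)
       <= Lag X H Y lam1 lam2 rho1 rho2 delta1 delta2 mu
         (Om k.+1) (U k.+1) (Q k.+1) (W k.+1) (e1 k.+1) e' (Z1 k) (Z2 k)) ->
    (forall k, Z1 k.+1 = Z1 k + mu *: (H - Q k.+1 *m U k.+1 - e1 k.+1)) ->
    (forall k, Z2 k.+1 = Z2 k + mu *: (Y - W k.+1 *m Q k.+1 *m U k.+1 - e2 k.+1)) ->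
    let Lk := fun k : nat => Lag X H Y lam1 lam2 rho1 rho2 delta1 delta2 mu
         (Om k) (U k) (Q k) (W k) (e1 k) (e2 k) (Z1 k) (Z2 k) in
    [/\ (forall k : nat, (1 <= k)%N -> 0 <= Lk k),
        (forall k : nat, (1 <= k)%N -> Lk k.+1 <= Lk k) &
        exists l : R, Lk @ \oo --> l]].
Proof.
move=> l1p l2p r1p r2p d1p d2p mup hmu Om0 U0 Q0 W0 e10 e20 Z10 Z20.
pose L0 := Lag X H Y lam1 lam2 rho1 rho2 delta1 delta2 mu Om0 U0 Q0 W0 e10 e20 Z10 Z20.
pose C0 := (fsq Z10 + fsq Z20) / (2 * mu).
pose K := L0 + C0.
pose M := K + (4 * (rho1 + rho2) * K + 2 * (fsq Z10 + fsq Z20)) / mu.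
pose ub := M / lam1 * (M / lam1).
pose qb := 2 * M / delta1.
pose wb := 2 * M / delta2.
have mu0 : 0 <= mu := ltW mup.
have l20 : 0 <= lam2 := ltW l2p.
have fZ10 := fsq_ge0 Z10; have fZ20 := fsq_ge0 Z20.
have coer_nonneg : forall p q (U : 'M[R]_(p, q)) s1 r1 s2 r2 (Q : 'M[R]_(s1, r1)) (W : 'M[R]_(s2, r2)),
    0 <= lam1 * l1n U + delta1 / 2 * fsq Q + delta2 / 2 * fsq W.
  move=> p q U s1 r1 s2 r2 Q W.
  have := l1n_ge0 U; have := fsq_ge0 Q; have := fsq_ge0 W => fW fQ lU.
  have a1 : 0 <= lam1 * l1n U by apply: mulr_ge0 => //; exact: ltW.
  have a2 : 0 <= delta1 / 2 * fsq Q by apply: mulr_ge0 => //; apply: divr_ge0 => //; exact: ltW.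
  have a3 : 0 <= delta2 / 2 * fsq W by apply: mulr_ge0 => //; apply: divr_ge0 => //; exact: ltW.
  lra.
have coer0 : forall (Om : 'M[R]_(r, m)) (U : 'M[R]_(r, n)) (Q : 'M[R]_(s, r)) (W : 'M[R]_(c, s))
    (e1 : 'M[R]_(s, n)) (e2 : 'M[R]_(c, n)),
    lam1 * l1n U + delta1 / 2 * fsq Q + delta2 / 2 * fsq W + rho1 / 2 * fsq e1 + rho2 / 2 * fsq e2
    <= Lag X H Y lam1 lam2 rho1 rho2 delta1 delta2 mu Om U Q W e1 e2 Z10 Z20 + C0.
  move=> Om U Q W e1 e2; have := coer_gen X H Y lam1 rho1 rho2 delta1 delta2 mup Om U Q W e1 Z10 e2 Z20 l20.
  rewrite /C0; lra.
have K0 : 0 <= K.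
  have := coer0 Om0 U0 Q0 W0 e10 e20; have := coer_nonneg _ _ U0 _ _ _ _ Q0 W0.
  have : 0 <= rho1 / 2 * fsq e10 by apply: mulr_ge0; [apply: divr_ge0 => //; exact: ltW | exact: fsq_ge0].
  have : 0 <= rho2 / 2 * fsq e20 by apply: mulr_ge0; [apply: divr_ge0 => //; exact: ltW | exact: fsq_ge0].
  rewrite /K /L0; lra.
have MK : K <= M.
  rewrite /M lerDl; apply: divr_ge0 => //; apply: addr_ge0.
    by apply: mulr_ge0 => //; apply: mulr_ge0 => //; lra.
  by apply: mulr_ge0 => //; lra.
have M0 : 0 <= M by lra.
have ub0 : 0 <= ub by apply: mulr_ge0; apply: divr_ge0 => //; exact: ltW.
have qb0 : 0 <= qb by apply: divr_ge0; [apply: mulr_ge0 | exact: ltW].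
have wb0 : 0 <= wb by apply: divr_ge0; [apply: mulr_ge0 | exact: ltW].
exists ((1 + mu * qb + mu * (wb * qb)) / mu), ((mu * ub + mu * (wb * ub) + delta1) / mu),
   ((mu * (qb * ub) + delta2) / mu).
split.
- apply: divr_gt0 => //; have : 0 <= mu * qb + mu * (wb * qb).
    by apply: addr_ge0; apply: mulr_ge0 => //; apply: mulr_ge0.
  lra.
- apply: divr_gt0 => //; have : 0 <= mu * ub + mu * (wb * ub).
    by apply: addr_ge0; apply: mulr_ge0 => //; apply: mulr_ge0.
  lra.
- apply: divr_gt0 => //; have : 0 <= mu * (qb * ub) by apply: mulr_ge0 => //; apply: mulr_ge0.
  lra.
move=> etaU etaQ etaW hU hQ hW Om U Q W e1 e2 Z1 Z2 hOm0 hU0 hQ0 hW0 he10 he20 hZ10 hZ20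
  hUk hQk hWk hOmk he1k he2k hZ1k hZ2k Lk.
pose LL := Lag (r:=r) X H Y lam1 lam2 rho1 rho2 delta1 delta2 mu.
have aU0 : 0 < mu * etaU.
  apply: mulr_gt0 => //; apply: le_lt_trans hU; apply: divr_ge0 => //.
  by apply: addr_ge0; [apply: addr_ge0 => //; apply: mulr_ge0 | apply: mulr_ge0 => //; apply: mulr_ge0].
have aQ0 : 0 < mu * etaQ.
  apply: mulr_gt0 => //; apply: le_lt_trans hQ; apply: divr_ge0 => //.
  apply: addr_ge0; last exact: ltW.
  by apply: addr_ge0; apply: mulr_ge0 => //; apply: mulr_ge0.
have aW0 : 0 < mu * etaW.
  apply: mulr_gt0 => //; apply: le_lt_trans hW; apply: divr_ge0 => //.
  apply: addr_ge0; last exact: ltW.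
  by apply: mulr_ge0 => //; apply: mulr_ge0.
have haU : 1 + mu * qb + mu * (wb * qb) <= mu * etaU.
  by move: hU; rewrite ltr_pdivrMr // (mulrC etaU) => /ltW.
have haQ : mu * ub + mu * (wb * ub) + delta1 <= mu * etaQ.
  by move: hQ; rewrite ltr_pdivrMr // (mulrC etaQ) => /ltW.
have haW : mu * (qb * ub) + delta2 <= mu * etaW.
  by move: hW; rewrite ltr_pdivrMr // (mulrC etaW) => /ltW.
have s2 : Num.sqrt (2 : R) ^+ 2 = 2 by rewrite sqr_sqrtr.
have s0 : 0 <= Num.sqrt (2 : R) by exact: sqrtr_ge0.
have hr1 : Num.sqrt 2 * rho1 <= mu.
  apply: le_trans hmu; apply: ler_wpM2l => //; by rewrite le_max lexx.
have hr2 : Num.sqrt 2 * rho2 <= mu.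
  apply: le_trans hmu; apply: ler_wpM2l => //; by rewrite le_max lexx orbT.
have q1 : 2 * rho1 ^+ 2 <= mu ^+ 2.
  have := ler_pM (mulr_ge0 s0 (ltW r1p)) (mulr_ge0 s0 (ltW r1p)) hr1 hr1.
  have -> : Num.sqrt 2 * rho1 * (Num.sqrt 2 * rho1) = Num.sqrt 2 ^+ 2 * rho1 ^+ 2 by ring.
  by rewrite s2 expr2.
have q2 : 2 * rho2 ^+ 2 <= mu ^+ 2.
  have := ler_pM (mulr_ge0 s0 (ltW r2p)) (mulr_ge0 s0 (ltW r2p)) hr2 hr2.
  have -> : Num.sqrt 2 * rho2 * (Num.sqrt 2 * rho2) = Num.sqrt 2 ^+ 2 * rho2 ^+ 2 by ring.
  by rewrite s2 expr2.
have r1m : rho1 <= mu by nra.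
have r2m : rho2 <= mu by nra.
have hb0 : forall (Om' : 'M[R]_(r, m)) (U' : 'M[R]_(r, n)) (Q' : 'M[R]_(s, r)) (W' : 'M[R]_(c, s)),
    LL Om' U' Q' W' (e1 0%N) (e2 0%N) (Z1 0%N) (Z2 0%N)
      <= LL (Om 0%N) (U 0%N) (Q 0%N) (W 0%N) (e1 0%N) (e2 0%N) (Z1 0%N) (Z2 0%N) ->
    [/\ fsq U' <= ub, fsq Q' <= qb & fsq W' <= wb].
  move=> Om' U' Q' W'; rewrite hOm0 hU0 hQ0 hW0 he10 he20 hZ10 hZ20 -/L0 => h.
  apply: bounds_of => //.
  have := coer0 Om' U' Q' W' e10 e20.
  have : 0 <= rho1 / 2 * fsq e10 by apply: mulr_ge0; [apply: divr_ge0 => //; exact: ltW | exact: fsq_ge0].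
  have : 0 <= rho2 / 2 * fsq e20 by apply: mulr_ge0; [apply: divr_ge0 => //; exact: ltW | exact: fsq_ge0].
  rewrite /LL -/L0 in h; rewrite /K in MK; lra.
have [A0 z11 z21 L1eq] := iter_step l1p mup r1p r2p aU0 aQ0 aW0 ub0 qb0 wb0 haU haQ haW hb0
   (hUk 0%N) (hQk 0%N) (hWk 0%N) (hOmk 0%N (Om 0%N)) (he1k 0%N) (he2k 0%N) (hZ1k 0%N) (hZ2k 0%N).
have L1M : Lk 1%N <= M.
  rewrite /Lk L1eq.
  set S6 := Lag _ _ _ _ _ _ _ _ _ _ (Om 1%N) (U 1%N) (Q 1%N) (W 1%N) (e1 1%N) (e2 1%N) _ _.
  set R1 := H - Q 1%N *m U 1%N - e1 1%N.
  set R2 := Y - W 1%N *m Q 1%N *m U 1%N - e2 1%N.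
  have c6 := coer0 (Om 1%N) (U 1%N) (Q 1%N) (W 1%N) (e1 1%N) (e2 1%N).
  rewrite -hZ10 -hZ20 -/S6 in c6.
  have cn := coer_nonneg _ _ (U 1%N) _ _ _ _ (Q 1%N) (W 1%N).
  have fe1 := fsq_ge0 (e1 1%N); have fe2 := fsq_ge0 (e2 1%N).
  have fd1 := fsq_ge0 (e1 0%N - e1 1%N); have fd2 := fsq_ge0 (e2 0%N - e2 1%N).
  have t1 : 0 <= (rho1 + mu) / 2 * fsq (e1 0%N - e1 1%N).
    by apply: mulr_ge0 => //; apply: divr_ge0 => //; lra.
  have t2 : 0 <= (rho2 + mu) / 2 * fsq (e2 0%N - e2 1%N).
    by apply: mulr_ge0 => //; apply: divr_ge0 => //; lra.
  have L0e : LL (Om 0%N) (U 0%N) (Q 0%N) (W 0%N) (e1 0%N) (e2 0%N) (Z1 0%N) (Z2 0%N) = L0.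
    by rewrite hOm0 hU0 hQ0 hW0 he10 he20 hZ10 hZ20.
  rewrite /LL in L0e; rewrite L0e -/S6 in A0.
  have C00 : 0 <= C0 by rewrite /C0; apply: divr_ge0; lra.
  have S6K : S6 <= L0 by lra.
  have e1K : rho1 * fsq (e1 1%N) <= 2 * K.
    have : rho1 / 2 * fsq (e1 1%N) <= K.
      have : 0 <= rho2 / 2 * fsq (e2 1%N) by apply: mulr_ge0 => //; apply: divr_ge0 => //; lra.
      rewrite /K; lra.
    have -> : rho1 / 2 * fsq (e1 1%N) = (rho1 * fsq (e1 1%N)) / 2 by ring.
    rewrite ler_pdivrMr //; lra.
  have e2K : rho2 * fsq (e2 1%N) <= 2 * K.
    have : rho2 / 2 * fsq (e2 1%N) <= K.
      have : 0 <= rho1 / 2 * fsq (e1 1%N) by apply: mulr_ge0 => //; apply: divr_ge0 => //; lra.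
      rewrite /K; lra.
    have -> : rho2 / 2 * fsq (e2 1%N) = (rho2 * fsq (e2 1%N)) / 2 by ring.
    rewrite ler_pdivrMr //; lra.
  have mR1 : mu *: R1 = rho1 *: e1 1%N - Z10.
    by rewrite -z11 -hZ10 (hZ1k 0%N) (addrC (Z1 0%N)) addrK.
  have mR2 : mu *: R2 = rho2 *: e2 1%N - Z20.
    by rewrite -z21 -hZ20 (hZ2k 0%N) (addrC (Z2 0%N)) addrK.
  have b1 : mu * fsq R1 * mu <= 4 * rho1 * K + 2 * fsq Z10.
    have := fsqB_le (rho1 *: e1 1%N) Z10; rewrite -mR1 !fsqZ.
    have : rho1 ^+ 2 * fsq (e1 1%N) <= rho1 * (2 * K).
      by rewrite expr2 -mulrA; apply: ler_wpM2l => //; exact: ltW.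
    have -> : mu ^+ 2 * fsq R1 = mu * fsq R1 * mu by ring.
    lra.
  have b2 : mu * fsq R2 * mu <= 4 * rho2 * K + 2 * fsq Z20.
    have := fsqB_le (rho2 *: e2 1%N) Z20; rewrite -mR2 !fsqZ.
    have : rho2 ^+ 2 * fsq (e2 1%N) <= rho2 * (2 * K).
      by rewrite expr2 -mulrA; apply: ler_wpM2l => //; exact: ltW.
    have -> : mu ^+ 2 * fsq R2 = mu * fsq R2 * mu by ring.
    lra.
  have : mu * fsq R1 + mu * fsq R2 <= (4 * (rho1 + rho2) * K + 2 * (fsq Z10 + fsq Z20)) / mu.
    rewrite ler_pdivlMr // mulrDl; lra.
  rewrite /M /K; lra.
have step : forall k, Z1 k = rho1 *: e1 k -> Z2 k = rho2 *: e2 k -> Lk k <= M ->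
    [/\ Z1 k.+1 = rho1 *: e1 k.+1, Z2 k.+1 = rho2 *: e2 k.+1 & Lk k.+1 <= Lk k].
  move=> k z1 z2 LM.
  have hb : forall (Om' : 'M[R]_(r, m)) (U' : 'M[R]_(r, n)) (Q' : 'M[R]_(s, r)) (W' : 'M[R]_(c, s)),
      LL Om' U' Q' W' (e1 k) (e2 k) (Z1 k) (Z2 k)
        <= LL (Om k) (U k) (Q k) (W k) (e1 k) (e2 k) (Z1 k) (Z2 k) ->
      [/\ fsq U' <= ub, fsq Q' <= qb & fsq W' <= wb].
    move=> Om' U' Q' W' h; apply: bounds_of => //.
    have := coer_rho (lam2:=lam2) (rho1:=rho1) (rho2:=rho2) X H Y lam1 delta1 delta2 mup Om' U' Q' W' (e1 k) (e2 k) l20.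
    rewrite -z1 -z2 (ltW r1p) r1m (ltW r2p) r2m => /(_ isT isT) h2.
    exact: (le_trans h2 (le_trans h LM)).
  have [A z1' z2' Leq] := iter_step l1p mup r1p r2p aU0 aQ0 aW0 ub0 qb0 wb0 haU haQ haW hb
     (hUk k) (hQk k) (hWk k) (hOmk k (Om k)) (he1k k) (he2k k) (hZ1k k) (hZ2k k).
  split => //.
  rewrite /Lk Leq.
  set R1 := H - Q k.+1 *m U k.+1 - e1 k.+1.
  set R2 := Y - W k.+1 *m Q k.+1 *m U k.+1 - e2 k.+1.
  have mR1 : mu *: R1 = rho1 *: (e1 k.+1 - e1 k).
    by rewrite (scalerBr rho1) -z1' -z1 (hZ1k k) (addrC (Z1 k)) addrK.
  have mR2 : mu *: R2 = rho2 *: (e2 k.+1 - e2 k).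
    by rewrite (scalerBr rho2) -z2' -z2 (hZ2k k) (addrC (Z2 k)) addrK.
  have b1 : mu * fsq R1 <= (rho1 + mu) / 2 * fsq (e1 k - e1 k.+1).
    apply: mu_ineq => //; [exact: ltW | exact: fsq_ge0 |].
    have := congr1 (fun M => fsq M) mR1; rewrite !fsqZ -opprB fsqN => <-; ring.
  have b2 : mu * fsq R2 <= (rho2 + mu) / 2 * fsq (e2 k - e2 k.+1).
    apply: mu_ineq => //; [exact: ltW | exact: fsq_ge0 |].
    have := congr1 (fun M => fsq M) mR2; rewrite !fsqZ -opprB fsqN => <-; ring.
  exact: le_trans (lerD (lerD (lexx _) b1) b2) A.
have inv : forall k, (1 <= k)%N ->
    [/\ Z1 k = rho1 *: e1 k, Z2 k = rho2 *: e2 k & Lk k <= M].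
  elim=> [//|k IH _].
  case: k IH => [_|k IH]; first by split.
  have [a b d] := IH isT.
  have [a' b' d'] := step _ a b d.
  by split => //; apply: le_trans d.
split.
- move=> k k1; have [z1 z2 _] := inv k k1.
  rewrite /Lk z1 z2.
  have := coer_rho (lam2:=lam2) (rho1:=rho1) (rho2:=rho2) X H Y lam1 delta1 delta2 mup (Om k) (U k) (Q k) (W k) (e1 k) (e2 k) l20.
  rewrite (ltW r1p) r1m (ltW r2p) r2m => /(_ isT isT) h2.
  exact: le_trans (coer_nonneg _ _ (U k) _ _ _ _ (Q k) (W k)) h2.
- move=> k k1; have [z1 z2 LM] := inv k k1; by have [] := step k z1 z2 LM.
have pos : forall k, (1 <= k)%N -> 0 <= Lk k.
  move=> k k1; have [z1 z2 _] := inv k k1.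
  rewrite /Lk z1 z2.
  have := coer_rho (lam2:=lam2) (rho1:=rho1) (rho2:=rho2) X H Y lam1 delta1 delta2 mup (Om k) (U k) (Q k) (W k) (e1 k) (e2 k) l20.
  rewrite (ltW r1p) r1m (ltW r2p) r2m => /(_ isT isT) h2.
  exact: le_trans (coer_nonneg _ _ (U k) _ _ _ _ (Q k) (W k)) h2.
have dec : forall k, Lk k.+2 <= Lk k.+1.
  move=> k; have [z1 z2 LM] := inv k.+1 isT; by have [] := step k.+1 z1 z2 LM.
have cv : cvgn (fun k => Lk k.+1).
  apply: nonincreasing_is_cvgn.
    by apply/nonincreasing_seqP => k; exact: dec.
  exists 0 => _ [k _ <-]; exact: pos.
have /cvg_ex [l hl] := cv.
exists l; rewrite -cvg_shiftS; exact: hl.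
Qed.
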